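(* Let $k\geq 1$ be an integer and let $G$ be a connected graph with $G=G_1\bigoplus_k G_2$ (a $k$-clique-sum of $G_1$ and $G_2$ along a vertex set $S'$ with $|S'|=k$). Then: (1) $G_i$ is connected for each $i\in\{1,2\}$; (2) for each $i\in\{1,2\}$ and every $S\subseteq V(G_i)$, $\omega(G_i-S)\leq \omega(G-S)$; (3) if $G_i\not\cong K_k$ for each $i\in\{1,2\}$, then $S'$ is a vertex-cut of $G$.
   Context: $\omega(H)$ denotes the number of components of a graph $H$. If $H$ is a simple graph with induced subgraphs $H_1,H_2$ and $S\subseteq V(H)$ such that $V(H)=V(H_1)\cup V(H_2)$, $E(H)=E(H_1)\cup E(H_2)$ and $S=V(H_1)\cap V(H_2)$, then $H$ is obtained by pasting $H_1$ and $H_2$ along $S$. A graph $G$ is a $k$-clique-sum of $G_1$ and $G_2$, written $G_1\bigoplus_k G_2$, if $G$ is obtained by pasting together two graphs $G_1'$ and $G_2'$ along a set $S'$ of order $k$, and for each $i\in\{1,2\}$, $G_i$ is obtained from $G_i'$ by extending $G_i'[S']$ to a clique of order $k$ (so $V(G_i)=V(G_i')\subseteq V(G)$). $S'$ is called the vertex set with respect to the clique-sum. A vertex-cut is a set of vertices whose removal increases the number of components. *)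

(* Defs.v *)
From mathcomp Require Import all_boot.
Set Implicit Arguments. Unset Strict Implicit. Unset Printing Implicit Defensive.

(* A finite simple graph is a symmetric irreflexive relation e on a finType T;
   a graph "with vertex set A" is (A, e restricted to A). *)

Definition restr (T : finType) (e : rel T) (A : {set T}) : rel T :=
  fun x y => [&& x \in A, y \in A & e x y].

Definition comp_of (T : finType) (e : rel T) (A : {set T}) (x : T) : {set T} :=
  [set y in A | connect (restr e A) x y].

Definition ncomp (T : finType) (e : rel T) (A : {set T}) : nat :=
  #|[set comp_of e A x | x in A]|.

Definition gconnected (T : finType) (e : rel T) (A : {set T}) : Prop :=
  ncomp e A = 1.

(* G = (T, e) is obtained by pasting G[V1] and G[V2] along V1 :&: V2 with
   |V1 :&: V2| = k, i.e. G is a k-clique-sum with respect to V1, V2. *)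
Definition clique_sum_split (T : finType) (e : rel T) (V1 V2 : {set T}) (k : nat)
  : Prop :=
  [/\ V1 :|: V2 = setT, #|V1 :&: V2| = k &
      forall x y, e x y -> (x \in V1) && (y \in V1) || (x \in V2) && (y \in V2)].

(* edge relation of G_i: G[V_i] with G[S'] extended to a clique, S' = V1 :&: V2
   (vertex set of G_i is Vi) *)
Definition cs_part (T : finType) (e : rel T) (V1 V2 Vi : {set T}) : rel T :=
  fun x y => [&& x \in Vi, y \in Vi &
     e x y || [&& x \in V1 :&: V2, y \in V1 :&: V2 & x != y]].

Definition iso_complete (T : finType) (e : rel T) (A : {set T}) (k : nat) : Prop :=
  exists f : 'I_k -> T,
    [/\ injective f, forall x, x \in A <-> exists i, f i = x &
        forall i j, e (f i) (f j) = (i != j)].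

(* Main.v *)
Require Import Defs.
From mathcomp Require Import all_boot.

Set Implicit Arguments. Unset Strict Implicit. Unset Printing Implicit Defensive.

Lemma closed_conn (T : finType) (r : rel T) (P : pred T) x y :
  P x -> (forall u v, P u -> r u v -> P v) -> connect r x y -> P y.
Proof.
move=> Px cl /connectP [p pth ->].
elim: p x Px pth => [|z p IH] x Px //= /andP [rxz pth].
exact: IH (cl _ _ Px rxz) pth.
Qed.

Lemma map_conn (T : finType) (r r2 : rel T) (P : pred T) (f : T -> T) x y :
  P x -> (forall u v, P u -> r u v -> P v) ->
  (forall u v, P u -> r u v -> connect r2 (f u) (f v)) ->
  connect r x y -> connect r2 (f x) (f y).
Proof.
move=> Px cl fr /connectP [p pth ->].
elim: p x Px pth => [|z p IH] x Px /=; first by rewrite connect0.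
case/andP=> rxz pth.
exact: connect_trans (fr _ _ Px rxz) (IH _ (cl _ _ Px rxz) pth).
Qed.

Lemma restr_sym (T : finType) (r : rel T) A : symmetric r -> symmetric (restr r A).
Proof. by move=> sr u v; rewrite /restr sr andbCA. Qed.

Lemma comp_of_eq (T : finType) (r : rel T) A x y :
  symmetric r -> connect (restr r A) x y -> comp_of r A x = comp_of r A y.
Proof.
move=> sr cxy.
have sR := sym_connect_sym (restr_sym A sr).
apply/setP => z; rewrite !inE; case: (z \in A) => //=.
apply/idP/idP => h.
  by rewrite sR in cxy; exact: connect_trans cxy h.
exact: connect_trans cxy h.
Qed.

Lemma core (T : finType) (e e1 : rel T) (W1 W2 K S : {set T}) :
 symmetric e -> K = W1 :&: W2 ->
 (forall x y, e x y -> (x \in W1) && (y \in W1) || (x \in W2) && (y \in W2)) ->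
 (forall x y, e1 x y = [&& x \in W1, y \in W1 & e x y || [&& x \in K, y \in K & x != y]]) ->
 S \subset W1 ->
 ncomp e1 (W1 :\: S) <= ncomp e (~: S).
Proof.
move=> se hK he he1 sS.
set A1 := W1 :\: S; set A := ~: S.
have se1 : symmetric e1.
  move=> x y; rewrite !he1 se (eq_sym y x).
  by case: (x \in W1); case: (y \in W1); case: (x \in K); case: (y \in K).
pose o := [pick s in K :\: S].
have oP : forall s, o = Some s -> s \in K :\: S.
  by move=> s; rewrite /o; case: pickP => // z zK [<-].
have oN : forall s, s \in K :\: S -> o != None.
  by move=> s sK; rewrite /o; case: pickP => // H; have := H s; rewrite sK.
pose p v := if v \in W1 then v else odflt v o.
pose P := fun v => (v \notin S) && ((v \in W1) || (o != None)).
have KW1 : forall s, s \in K -> s \in W1 by move=> s; rewrite hK inE => /andP [].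
have KW2 : forall s, s \in K -> s \in W2 by move=> s; rewrite hK inE => /andP [].
have clq : forall s t, s \in K :\: S -> t \in K :\: S -> connect (restr e1 A1) s t.
  move=> s t; rewrite !inE => /andP [sS' sK] /andP [tS tK].
  have [->|neq] := eqVneq s t; first exact: connect0.
  apply: connect1; rewrite /restr he1 !inE sS' tS sK tK (KW1 _ sK) (KW1 _ tK) neq.
  by rewrite orbT.
have inKS : forall u v, u \in W1 -> v \notin W1 -> u \notin S -> e u v -> u \in K :\: S.
  move=> u v uW vW uS euv; have := he _ _ euv; rewrite (negbTE vW) andbF /=.
  by case/andP=> uW2 _; rewrite !inE uS hK inE uW uW2.
have cl : forall u v, P u -> restr e A u v -> P v.
  move=> u v /andP [uS Pu] /and3P [_]; rewrite /A inE => vS euv.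
  rewrite /P vS /=; case vW: (v \in W1) => //=.
  case uW: (u \in W1) Pu => //= _.
  exact: (oN u (inKS u v uW (negbT vW) uS euv)).
have fr : forall u v, P u -> restr e A u v -> connect (restr e1 A1) (p u) (p v).
  move=> u v /andP [uS Pu] /and3P [_]; rewrite /A inE => vS euv.
  rewrite /p; case uW: (u \in W1); case vW: (v \in W1).
  - apply: connect1; rewrite /restr /A1 !inE uS vS uW vW he1 uW vW euv.
    by [].
  - have uK := inKS u v uW (negbT vW) uS euv.
    move: (oN _ uK); case Ho: o => [s|] //= _.
    exact: clq uK (oP _ Ho).
  - have vK : v \in K :\: S.
      have := he _ _ euv; rewrite uW /=; case/andP=> _ vW2.
      by rewrite !inE vS hK inE vW vW2.
    move: (oN _ vK); case Ho: o => [s|] //= _.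
    exact: clq (oP _ Ho) vK.
  - rewrite uW /= in Pu; case Ho: o Pu => [s|] //= _.
pose F (C : {set T}) := if [pick z in C] is Some z then comp_of e1 A1 (p z) else set0.
rewrite /ncomp.
apply: (leq_trans _ (leq_imset_card F _)).
apply: subset_leq_card; apply/subsetP => C /imsetP [x xA1 ->].
have xS : x \notin S by move: xA1; rewrite /A1 inE => /andP [].
have xW : x \in W1 by move: xA1; rewrite /A1 inE => /andP [].
have xA : x \in A by rewrite /A inE.
apply/imsetP; exists (comp_of e A x); first exact: imset_f.
rewrite /F; case: pickP => [z | H].
  rewrite inE => /andP [_ cxz].
  have Px : P x by rewrite /P xS xW.
  have := map_conn Px cl fr cxz; rewrite {1}/p xW => cxp.
  exact: comp_of_eq se1 cxp.
by have := H x; rewrite /= inE xA connect0.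
Qed.

Lemma nonK (T : finType) (e e1 : rel T) (W1 W2 K : {set T}) (k : nat) :
 irreflexive e -> K = W1 :&: W2 -> #|K| = k ->
 (forall x y, e1 x y = [&& x \in W1, y \in W1 & e x y || [&& x \in K, y \in K & x != y]]) ->
 ~ iso_complete e1 W1 k -> exists a, a \in W1 :\: W2.
Proof.
move=> ie hK cK he1 niso.
case: (boolP (W1 \subset W2)) => [sub | /subsetPn [a aW1 aW2]]; last first.
  by exists a; rewrite inE aW1 aW2.
exfalso; apply: niso.
have eK : W1 = K by rewrite hK; apply/eqP; rewrite eqEsubset subsetIl subsetI subxx sub.
exists (fun i => enum_val (cast_ord (esym cK) i)); split.
- by move=> i j /enum_val_inj /cast_ord_inj.
- move=> x; rewrite eK; split.
    move=> xK; exists (cast_ord cK (enum_rank_in xK x)).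
    by rewrite cast_ordK enum_rankK_in.
  by case=> i <-; exact: enum_valP.
- move=> i j; rewrite he1 eK !enum_valP /=.
  have [<-|neq] := eqVneq i j; first by rewrite ie eqxx.
  rewrite (inj_eq enum_val_inj) (inj_eq (@cast_ord_inj _ _ _)) neq.
  by rewrite orbT.
Qed.

Theorem lemma2p1 (T : finType) (e : rel T) (V1 V2 : {set T}) (k : nat) :
  1 <= k ->
  symmetric e -> irreflexive e ->
  clique_sum_split e V1 V2 k ->
  gconnected e setT ->
  [/\ (* (1) *)
      gconnected (cs_part e V1 V2 V1) V1 /\ gconnected (cs_part e V1 V2 V2) V2,
      (* (2) *)
      (forall S : {set T}, S \subset V1 ->
         ncomp (cs_part e V1 V2 V1) (V1 :\: S) <= ncomp e (~: S)) /\
      (forall S : {set T}, S \subset V2 ->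
         ncomp (cs_part e V1 V2 V2) (V2 :\: S) <= ncomp e (~: S)) &
      (* (3) *)
      (~ iso_complete (cs_part e V1 V2 V1) V1 k ->
       ~ iso_complete (cs_part e V1 V2 V2) V2 k ->
       ncomp e setT < ncomp e (~: (V1 :&: V2)))].
Proof.
move=> k1 se ie [hU hK he] gc.
have he' : forall x y, e x y -> (x \in V2) && (y \in V2) || (x \in V1) && (y \in V1).
  by move=> x y /he; rewrite orbC.
have h1 : forall S : {set T}, S \subset V1 ->
    ncomp (cs_part e V1 V2 V1) (V1 :\: S) <= ncomp e (~: S).
  by move=> S sS; apply: (core se (erefl _) he _ sS).
have h2 : forall S : {set T}, S \subset V2 ->
    ncomp (cs_part e V1 V2 V2) (V2 :\: S) <= ncomp e (~: S).
  by move=> S sS; apply: (core (W2 := V1) se (setIC _ _) he' _ sS).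
have [s sK] : exists s, s \in V1 :&: V2 by apply/card_gt0P; rewrite hK.
have conn : forall W : {set T}, W \subset setT -> s \in W -> ncomp (cs_part e V1 V2 W) (W :\: set0) <= 1 ->
   gconnected (cs_part e V1 V2 W) W.
  move=> W _ sW; rewrite setD0 => le1; apply/eqP; rewrite eqn_leq le1 /=.
  by apply/card_gt0P; exists (comp_of (cs_part e V1 V2 W) W s); exact: imset_f.
move: gc; rewrite /gconnected => gc.
split.
- split.
    apply: conn; [exact: subsetT | by move: sK; rewrite inE => /andP [] |].
    by have := h1 set0 (sub0set _); rewrite setC0 gc.
  apply: conn; [exact: subsetT | by move: sK; rewrite inE => /andP [] |].
  by have := h2 set0 (sub0set _); rewrite setC0 gc.
- by split.
move=> n1 n2.
have [a aW] := nonK ie (erefl _) hK (fun _ _ => erefl _) n1.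
have [b bW] := nonK (W2 := V1) ie (setIC _ _) hK (fun x y => erefl _) n2.
rewrite gc; apply/card_gt1P.
set K := V1 :&: V2.
have aK : a \in ~: K by move: aW; rewrite /K !inE => /andP [/negbTE -> ->].
have bK : b \in ~: K by move: bW; rewrite /K !inE => /andP [/negbTE -> _].
exists (comp_of e (~: K) a), (comp_of e (~: K) b); split; try exact: imset_f.
apply/negP => /eqP eab.
have : b \in comp_of e (~: K) a by rewrite eab inE bK connect0.
rewrite inE bK /= => cab.
have cl : forall u v, u \in V1 :\: V2 -> restr e (~: K) u v -> v \in V1 :\: V2.
  move=> u v; rewrite inE => /andP [uV2 uV1] /and3P [_]; rewrite /K !inE => vK /he.
  rewrite (negbTE uV2) uV1 /= orbF => vV1.
  by rewrite vV1 andbT; move: vK; rewrite vV1.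
have := closed_conn (P := mem (V1 :\: V2)) aW cl cab.
by move: bW; rewrite !inE => /andP [/negbTE ->]; rewrite andbF.
Qed.
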